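(* For every $\varepsilon>0$, with $\mathcal D_\varepsilon$ the value defined in the context, $\mathrm{ALG}\le\frac{2+\varepsilon}{\varepsilon}\,\mathcal D_\varepsilon$.
   Context: Network. $S,T,R,D$ are pairwise disjoint finite sets (sources, transmitters, receivers, destinations). Each transmitter $t\in T$ is attached to a source $s(t)\in S$ via a link of integer delay $d(s(t),t)\ge 0$; each receiver $r\in R$ is attached to a destination $d(r)\in D$ via a link of integer delay $d(r,d(r))\ge 0$. A set $E_R\subseteq T\times R$ of reconfigurable edges is given, each $e\in E_R$ with integer delay $d(e)\ge 1$. A set $E_\ell\subseteq S\times D$ of fixed links is given, each with integer delay $\ge0$. Two edges of $E_R$ are adjacent if they share a transmitter or a receiver (an edge is adjacent to itself). Packets. $\Pi$ is a finite set of unit-size packets; packet $p$ has weight $w_p>0$, release time $r_p\in\mathbb Z_{\ge1}$, source $s_p$, destination $d_p$. Let $E(p)=\{(t,r)\in E_R: s(t)=s_p,\ d(r)=d_p\}$; assume $E(p)\neq\emptyset$ for all $p$. $\Pi_\ell$ is the set of packets with $(s_p,d_p)\in E_\ell$, and $\ell_p:=d(s_p,d_p)$ for them. Fix a total order $\prec$ on $\Pi$ with $r_p<r_q\Rightarrow p\prec q$. Algorithm ALG. Packets are processed in the order $\prec$; $p$ is processed at time $r_p$, before transmission step $r_p$. A packet assigned to a reconfigurable edge $e$ is split into $d(e)$ chunks of weight $w_p/d(e)$ assigned to $e$; $p(c)$, $w_c$, $e(c)$ denote the packet, weight and edge of chunk $c$. A chunk is pending until transmitted; $W(C)$ is the total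 weight of a set $C$ of chunks. When $p$ is processed, $B(p)$ is the set of pending chunks of packets $p'\prec p$; for $e=(t,r)\in E(p)$, $\mathrm{Adj}(p,e)$ = chunks of $B(p)$ whose edge is adjacent to $e$, $H(p,e)=\{c\in\mathrm{Adj}(p,e):w_c\ge w_p/d(e)\}$, $L(p,e)=\mathrm{Adj}(p,e)\setminus H(p,e)$, and $\mathrm{imp}(p,e)=w_p(d(s_p,t)+\frac{d(e)+1}{2}+d(r,d_p))+w_p|H(p,e)|+d(e)W(L(p,e))$. With $e^*\in\arg\min_{e\in E(p)}\mathrm{imp}(p,e)$: if $p\in\Pi_\ell$ and $w_p\ell_p\le\mathrm{imp}(p,e^* )$, $p$ is sent over its fixed link (latency $w_p\ell_p$); otherwise $p$ is assigned to $e(p):=e^*$ and split into chunks. Scheduler: at each integer $\tau\ge1$, build $M_\tau$ greedily over pending chunks in order of decreasing weight (ties by $\prec$ on packets, then arbitrary), adding $c$ iff no chunk already in $M_\tau$ has an edge adjacent to $e(c)$; chunks of $M_\tau$ are transmitted at step $\tau$. If chunk $c$ of $p$ is transmitted at step $\tau_c$ via $e(p)=(t,r)$, its completion time is $f_c=\tau_c+1+d(s_p,t)+d(r,d_p)$, and $c$ is active at integer times $\tau$ with $r_p\le\tau<f_c$. The cost is $\mathrm{ALG}=\sum_{p\text{ sent on fixed link}}w_p\ell_p+\sum_{\text{chunks }c}w_c(f_c-r_{p(c)})$. Dual assignment: $\alpha_p=w_p\ell_p$ if $p$ is sent over its fixed link, and $\alpha_p=\mathrm{imp}(p,e(p))$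 (computed when $p$ is processed) otherwise; for $t\in T$ and integer $\tau\ge1$, $\beta_{t,\tau}$ is the total weight of chunks active at $\tau$ whose edge has transmitter $t$, and $\beta_{r,\tau}$ ($r\in R$) likewise with receiver $r$. For $\varepsilon>0$ define $$\mathcal D_\varepsilon=\sum_{p\in\Pi}\alpha_p-\frac{1}{2+\varepsilon}\Big(\sum_{t\in T}\sum_{\tau\ge1}\beta_{t,\tau}+\sum_{r\in R}\sum_{\tau\ge1}\beta_{r,\tau}\Big).$$ *)

(* Defs.v *)
From mathcomp Require Import all_boot all_order all_algebra.
Set Implicit Arguments. Unset Strict Implicit. Unset Printing Implicit Defensive.
Import Order.TTheory GRing.Theory Num.Theory.
Local Open Scope ring_scope.

(* The network.  S, T, R, D are modelled by four (hence pairwise disjoint)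
   finite types Src, Tx, Rx, Dst. *)
Record network := Network {
  Src : finType; Dst : finType; Tx : finType; Rx : finType;
  srcOf : Tx -> Src;
  dSrc  : Tx -> nat;
  dstOf : Rx -> Dst;
  dDst  : Rx -> nat;
  ER    : {set Tx * Rx};
  dEdge : Tx * Rx -> nat;
  EL    : {set Src * Dst};
  dFix  : Src * Dst -> nat
}.

(* Packets: Pi = 'I_np; the total order "prec" is the order of indices. *)
Record packets (N : network) (R : numDomainType) := Packets {
  np   : nat;
  wt   : 'I_np -> R;
  relt : 'I_np -> nat;
  psrc : 'I_np -> Src N;
  pdst : 'I_np -> Dst N
}.

Section Alg.
Variables (R : realFieldType) (N : network) (P : packets N R).

Notation Ed := (Tx N * Rx N)%type.
Notation Pk := 'I_(np P).

Definition Eset (p : Pk) : {set Ed} :=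
  [set e in ER N | (srcOf e.1 == psrc p) && (dstOf e.2 == pdst p)].

Definition inL (p : Pk) : bool := (psrc p, pdst p) \in EL N.
Definition ell (p : Pk) : nat := dFix (psrc p, pdst p).

Definition adj (e e' : Ed) : bool := (e.1 == e'.1) || (e.2 == e'.2).
Definition adjo (o o' : option Ed) : bool :=
  if o is Some e then (if o' is Some e' then adj e e' else false) else false.

(* The run of ALG is determined by the decisions
   ch p = None (p sent on its fixed link) or ch p = Some e (e(p) = e). *)
Variable ch : Pk -> option Ed.

Definition nchunks (q : Pk) : nat := if ch q is Some e then dEdge e else 0.
Definition cw (q : Pk) : R := if ch q is Some e then wt q / (dEdge e)%:R else 0.

(* Since all chunks of one packet have the same weight and the same edge,
   (pairwise adjacent), at most one chunk of a packet is in M_tau and which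
   one is irrelevant; chunks of a packet are thus tracked by their number. *)
Definition chunk_le (q1 q2 : Pk) : bool :=
  (cw q2 < cw q1) || ((cw q1 == cw q2) && (q1 <= q2)%N).

Definition greedy (cands : seq Pk) : seq Pk :=
  foldl (fun acc q => if has (fun q' => adjo (ch q') (ch q)) acc then acc
                      else rcons acc q) [::] (sort chunk_le cands).

(* packets having a chunk in M_tau, given the pending counts [prev]
   before step tau *)
Definition matching (tau : nat) (prev : Pk -> nat) : seq Pk :=
  greedy [seq q <- enum 'I_(np P) | (relt q <= tau)%N && (0 < prev q)%N].

(* remAfter t q = number of pending chunks of q after transmission steps
   1..t (for released packets assigned to an edge). *)
Fixpoint remAfter (t : nat) : Pk -> nat :=
  match t with
  | 0 => nchunks
  | t'.+1 => let prev := remAfter t' in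
             let M := matching t'.+1 prev in
             fun q => if q \in M then (prev q).-1 else prev q
  end.

(* packets one of whose chunks is transmitted at step tau (tau >= 1) *)
Definition Mset (tau : nat) : seq Pk := matching tau (remAfter tau.-1).

(* pending chunks of q in B(p) when p is processed (before step r_p) *)
Definition pendAt (p q : Pk) : nat :=
  if (q < p)%N then remAfter (relt p).-1 q else 0.

Definition Hcount (p : Pk) (e : Ed) : nat :=
  \sum_(q < np P | adjo (ch q) (Some e) && (wt p / (dEdge e)%:R <= cw q))
     pendAt p q.
Definition WL (p : Pk) (e : Ed) : R :=
  \sum_(q < np P | adjo (ch q) (Some e) && ~~ (wt p / (dEdge e)%:R <= cw q))
     (pendAt p q)%:R * cw q.

Definition imp (p : Pk) (e : Ed) : R :=
  wt p * ((dSrc e.1)%:R + ((dEdge e)%:R + 1) / 2 + (dDst e.2)%:R)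
  + wt p * (Hcount p e)%:R + (dEdge e)%:R * WL p e.

(* ch is the decision sequence produced by ALG (up to the choice of the argmin) *)
Definition alg_run : Prop :=
  forall p : Pk, exists2 estar, estar \in Eset p &
    (forall e, e \in Eset p -> imp p estar <= imp p e) /\
    ch p = (if inL p && (wt p * (ell p)%:R <= imp p estar)
            then None else Some estar).

Definition ftime (q : Pk) (sigma : nat) : nat :=
  if ch q is Some e then (sigma + 1 + dSrc e.1 + dDst e.2)%N else 0%N.

(* A time horizon after which no chunk is pending nor active (every step with
   a pending chunk transmits at least one chunk). *)
Definition horizon : nat :=
  (\max_(p < np P) relt p + \sum_(p < np P) nchunks p
   + \max_(t : Tx N) dSrc t + \max_(r : Rx N) dDst r + 2)%N.

Definition ALG : R :=
  \sum_(p < np P | ch p == None) wt p * (ell p)%:R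
  + \sum_(p < np P) \sum_(1 <= sigma < horizon | p \in Mset sigma)
       cw p * (ftime p sigma - relt p)%:R.

Definition alpha (p : Pk) : R :=
  if ch p is Some e then imp p e else wt p * (ell p)%:R.

Definition activeW (p : Pk) (tau : nat) : R :=
  \sum_(1 <= sigma < horizon | p \in Mset sigma)
     (if (relt p <= tau)%N && (tau < ftime p sigma)%N then cw p else 0).

Definition beta_t (t : Tx N) (tau : nat) : R :=
  \sum_(p < np P | if ch p is Some e then e.1 == t else false) activeW p tau.
Definition beta_r (r : Rx N) (tau : nat) : R :=
  \sum_(p < np P | if ch p is Some e then e.2 == r else false) activeW p tau.

(* D_eps; beta vanishes for tau >= horizon, so the sums over tau >= 1 are
   taken over 1 <= tau < horizon. *)
Definition Dual (eps : R) : R :=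
  \sum_(p < np P) alpha p
  - (2 + eps)^-1 * (\sum_(t : Tx N) \sum_(1 <= tau < horizon) beta_t t tau
                    + \sum_(r : Rx N) \sum_(1 <= tau < horizon) beta_r r tau).

End Alg.

(* Main.v *)
Require Import Defs.
From mathcomp Require Import all_boot all_order all_algebra.
From mathcomp Require Import zify ring lra.
Set Implicit Arguments. Unset Strict Implicit. Unset Printing Implicit Defensive.
Import Order.TTheory GRing.Theory Num.Theory.
Local Open Scope ring_scope.

Section Pf.
Variables (R : realFieldType) (N : network) (P : packets N R).
Variable ch : 'I_(np P) -> option (Tx N * Rx N)%type.

Notation Pk := 'I_(np P).
Notation gstep := (fun (acc : seq Pk) (q : Pk) =>
  if has (fun q' => adjo (ch q') (ch q)) acc then acc else rcons acc q).

Lemma fold_sub (s acc : seq Pk) x : x \in acc -> x \in foldl gstep acc s.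
Proof.
elim: s acc => [|y s IH] acc //= Hx; apply: IH.
by case: ifP => _ //; rewrite mem_rcons in_cons Hx orbT.
Qed.

Lemma fold_mem (s acc : seq Pk) x : x \in foldl gstep acc s -> (x \in acc) || (x \in s).
Proof.
elim: s acc => [|y s IH] acc /=; first by rewrite orbF.
rewrite in_cons; move=> /IH /orP [|->]; last by rewrite !orbT.
case: ifP => _; first by move->.
by rewrite mem_rcons in_cons => /orP [->|->]; rewrite ?orbT.
Qed.

Lemma fold_block (le : rel Pk) (s acc : seq Pk) q :
  transitive le -> path le (head q s) (behead s) ->
  (forall a, a \in acc -> forall y, y \in s -> le a y) ->
  q \in s -> q \notin foldl gstep acc s ->
  exists2 q', q' \in foldl gstep acc s & adjo (ch q') (ch q) && le q' q.
Proof.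
move=> tr; elim: s acc => [|y s IH] acc //= Hp Hacc Hq Hn.
have Hys : forall z, z \in s -> le y z.
  move=> z; case: s Hp {IH Hq Hn Hacc} => [|z0 s] //= /andP [H1 H2].
  have := order_path_min tr H2 => /allP Hall.
  rewrite in_cons => /orP [/eqP -> //|/Hall]; exact: tr.
have Hp' : path le (head q s) (behead s).
  by case: s Hp {IH Hys Hq Hn Hacc} => //= z s /andP [].
case: (eqVneq q y) => [Eq|Nq].
  subst y; case: ifP Hn => Hh Hn.
    case/hasP: Hh => q' Hq' Ha; exists q'; first exact: fold_sub.
    by rewrite Ha (Hacc _ Hq') // mem_head.
  by move: Hn; rewrite fold_sub // mem_rcons mem_head.
move: Hq; rewrite in_cons (negPf Nq) /= => Hq.
apply: IH => //.
move=> a; case: ifP => _; first by move=> Ha z Hz; apply: Hacc => //; rewrite in_cons Hz orbT.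
rewrite mem_rcons in_cons => /orP [/eqP ->|Ha] z Hz; first exact: Hys.
by apply: Hacc => //; rewrite in_cons Hz orbT.
Qed.


Notation rem := (remAfter ch).
Notation M := (Mset ch).
Notation cle := (chunk_le ch).

Lemma cle_trans : transitive cle.
Proof.
move=> y x z; rewrite /chunk_le => /orP [H1|/andP [/eqP E1 H1]] /orP [H2|/andP [/eqP E2 H2]].
- by rewrite (lt_trans H2 H1).
- by rewrite -E2 H1.
- by rewrite E1 H2.
- by rewrite E1 E2 eqxx (leq_trans H1 H2) orbT.
Qed.

Lemma cle_total : total cle.
Proof.
move=> x y; rewrite /chunk_le; case: (ltgtP (cw ch x) (cw ch y)) => //= E.
exact: leq_total.
Qed.

Lemma remS t q : rem t.+1 q = if q \in M t.+1 then (rem t q).-1 else rem t q.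
Proof. by []. Qed.

Lemma M_cand t q : q \in M t -> (relt q <= t)%N && (0 < rem t.-1 q)%N.
Proof.
rewrite /Mset /matching /greedy => /fold_mem /=.
by rewrite mem_sort mem_filter => /andP [].
Qed.

Lemma M_block t q : (relt q <= t)%N -> (0 < rem t.-1 q)%N -> q \notin M t ->
  exists2 q', q' \in M t & adjo (ch q') (ch q) && cle q' q.
Proof.
move=> H1 H2; rewrite /Mset /matching /greedy => Hn.
apply: (fold_block cle_trans _ _ _ Hn) => //.
- set s := sort _ _.
  have : sorted cle s by apply: sort_sorted; exact: cle_total.
  by case: s.
- by rewrite mem_sort mem_filter H1 H2 mem_enum.
Qed.

Lemma remSn t q : rem t.+1 q = (rem t q - (q \in M t.+1))%N.
Proof. by rewrite remS; case: (q \in M t.+1); rewrite ?subn1 ?subn0. Qed.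

Lemma M_pos t q : q \in M t.+1 -> (0 < rem t q)%N.
Proof. by move/M_cand => /andP []. Qed.

Lemma rem_mono s t q : (s <= t)%N -> (rem t q <= rem s q)%N.
Proof.
move/subnKC <-; elim: (t - s)%N => [|k IH]; first by rewrite addn0.
by rewrite addnS remSn; apply: leq_trans IH; apply: leq_subr.
Qed.

Lemma rem_le t q : (rem t q <= nchunks ch q)%N.
Proof. by have := @rem_mono 0 t q (leq0n t). Qed.

Lemma cnt_inv a q b : (1 <= a)%N ->
  (\sum_(1 <= tau < b.+1) ((a <= tau)%N && (q \in M tau)) + rem (maxn b a.-1) q
   = rem a.-1 q)%N.
Proof.
move=> Ha; elim: b => [|b IH].
  by rewrite big_geq // add0n max0n.
rewrite big_nat_recr // -IH.
case: (leqP a b.+1) => Hab.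
- have -> : maxn b.+1 a.-1 = b.+1 by apply/maxn_idPl; lia.
  have -> : maxn b a.-1 = b by apply/maxn_idPl; lia.
  rewrite remSn /=.
  case E: (q \in M b.+1); last by rewrite subn0 addn0.
  have := M_pos E; lia.
- have -> : maxn b.+1 a.-1 = a.-1 by apply/maxn_idPr; lia.
  have -> : maxn b a.-1 = a.-1 by apply/maxn_idPr; lia.
  by rewrite /= addn0.
Qed.

Lemma cnt_le a q b : (1 <= a)%N ->
  (\sum_(1 <= tau < b) ((a <= tau)%N && (q \in M tau)) <= rem a.-1 q)%N.
Proof.
move=> Ha; case: b => [|b]; first by rewrite big_geq.
by rewrite -(cnt_inv q b Ha) leq_addr.
Qed.

Lemma self_inv q b :
  (2 * \sum_(1 <= tau < b.+1) (q \in M tau) * (rem tau.-1 q).-1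
   + rem b q * (rem b q).-1 = nchunks ch q * (nchunks ch q).-1)%N.
Proof.
elim: b => [|b IH]; first by rewrite big_geq.
rewrite big_nat_recr // -IH remS.
case E: (q \in M b.+1); last by rewrite /= mul0n addn0.
have := M_pos E; set k := rem b q; move=> Hk.
rewrite mul1n; have -> : k = k.-1.+1 by lia.
rewrite /=; case: k.-1 => [|j] /=; first by rewrite !muln0 !addn0.
lia.
Qed.

Lemma fg_inv q b : (1 <= relt q)%N ->
  (\sum_(1 <= s < b.+1) (q \in M s) * (s - relt q)
   + (b.+1 - relt q) * rem b q
   = \sum_(1 <= s < b.+1) (relt q <= s) * rem s q)%N.
Proof.
move=> Hr; elim: b => [|b IH].
  by rewrite !big_geq // add0n; have -> : (1 - relt q = 0)%N by lia.
rewrite !(big_nat_recr b.+1) // -IH remSn.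
case: (leqP (relt q) b.+1) => Hrb.
- case E: (q \in M b.+1); rewrite /=; last by nia.
  have := M_pos E; nia.
- have -> : (q \in M b.+1) = false.
    by apply/negP => /M_cand /andP [H _]; lia.
  have -> : (b.+2 - relt q = 0)%N by lia.
  have -> : (b.+1 - relt q = 0)%N by lia.
  by rewrite /= !mul0n !addn0.
Qed.

Lemma cnt1 q b : (\sum_(1 <= tau < b) (q \in M tau) <= nchunks ch q)%N.
Proof.
have := @cnt_le 1 q b (leqnn 1); rewrite /=.
by rewrite (@eq_big_nat _ _ _ 1 b _ (fun tau => (q \in M tau) : nat)) // => i /andP [->].
Qed.

Hypothesis hdE : forall e, e \in ER N -> (1 <= dEdge e)%N.
Hypothesis hw : forall p : Pk, 0 < wt p.
Hypothesis hr : forall p : Pk, (1 <= relt p)%N.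
Hypothesis hrun : alg_run ch.

Lemma chd q e : ch q = Some e -> (1 <= dEdge e)%N.
Proof.
move=> Hq; have [es Hes [_ Hc]] := hrun q.
move: Hc; rewrite Hq; case: ifP => // _ [->]; apply: hdE.
by move: Hes; rewrite inE => /andP [].
Qed.

Lemma cw_ge0 q : 0 <= cw ch q.
Proof.
rewrite /cw; case: (ch q) => // e; apply: divr_ge0; last exact: ler0n.
exact: ltW.
Qed.

Lemma cwd q e : ch q = Some e -> cw ch q * (dEdge e)%:R = wt q.
Proof.
move=> Hq; rewrite /cw Hq mulfVK //; have := chd Hq.
by rewrite pnatr_eq0; case: (dEdge e).
Qed.

Lemma nchE q e : ch q = Some e -> nchunks ch q = dEdge e.
Proof. by rewrite /nchunks => ->. Qed.

Lemma cwN q : ch q = None -> cw ch q = 0.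
Proof. by rewrite /cw => ->. Qed.

Notation H := (horizon ch).

Definition costp (q : Pk) := \sum_(1 <= s < H | q \in M s) cw ch q * (ftime ch q s - relt q)%:R.
Definition Gq (q : Pk) := (\sum_(1 <= tau < H) (relt q <= tau) * rem tau q)%N.
Definition Aq (q : Pk) := if ch q is Some e then wt q * (1 + dSrc e.1 + dDst e.2)%:R else 0.

Lemma H_gt (q : Pk) : (relt q < H)%N.
Proof.
rewrite /horizon.
have : (relt q <= \max_(p < np P) relt p)%N by apply: (leq_bigmax q).
lia.
Qed.

Lemma step1 q : costp q <= Aq q + cw ch q * (Gq q)%:R.
Proof.
rewrite /costp /Aq.
case Hq: (ch q) => [e|]; last first.
  by rewrite cwN // mul0r add0r big1 // => s _; rewrite mul0r.
have -> : \sum_(1 <= s < H | q \in M s) cw ch q * (ftime ch q s - relt q)%:R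
  = cw ch q * (\sum_(1 <= s < H) (q \in M s) * ((1 + dSrc e.1 + dDst e.2)
                 + (s - relt q)))%:R.
  rewrite natr_sum mulr_sumr big_mkcond /=; apply: eq_bigr => s _.
  case E: (q \in M s); last by rewrite /= mul0n mulr0.
  move/M_cand: E => /andP [Hs _].
  rewrite /ftime Hq mul1n; congr (_ * _%:R); lia.
have Hfg : (\sum_(1 <= s < H) (q \in M s) * (s - relt q) <= Gq q)%N.
  rewrite /Gq; have := H_gt q; case: H => [|b] // _.
  by rewrite -(fg_inv b (hr q)) leq_addr.
have Hc := cnt1 q H; rewrite (nchE Hq) in Hc.
apply: (@le_trans _ _ (cw ch q * ((dEdge e * (1 + dSrc e.1 + dDst e.2)) + Gq q)%:R)).
  apply: ler_wpM2l; first exact: cw_ge0.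
  rewrite ler_nat.
  under eq_bigr do rewrite mulnDr.
  rewrite big_split /= -big_distrl /=.
  apply: leq_add => //; apply: leq_mul => //.
rewrite natrD mulrDr natrM mulrA (cwd Hq) //.
Qed.

Definition Bk (tau : nat) (q' q : Pk) : bool :=
  [&& q' \in M tau, adjo (ch q') (ch q), cle q' q, q' != q & (relt q <= tau)%N].

Lemma step2 tau q : (1 <= tau)%N ->
  cw ch q * ((relt q <= tau) * rem tau q)%:R <=
  cw ch q * ((q \in M tau) * (rem tau.-1 q).-1)%:R
  + \sum_(q' | Bk tau q' q) cw ch q * (rem tau.-1 q)%:R.
Proof.
case: tau => [|t] // _.
have Hs0 : 0 <= \sum_(q' | Bk t.+1 q' q) cw ch q * (rem t q)%:R.
  by apply: sumr_ge0 => i _; apply: mulr_ge0 => //; exact: cw_ge0.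
case Hrt: (relt q <= t.+1)%N; last first.
  rewrite mul0n mulr0; apply: addr_ge0 => //; apply: mulr_ge0 => //; exact: cw_ge0.
rewrite mul1n remS /=.
case E: (q \in M t.+1).
  by rewrite mul1n -[X in X <= _]addr0 lerD2l.
rewrite mul0n mulr0 add0r.
case Hp: (0 < rem t q)%N; last first.
  have -> : rem t q = 0%N by lia.
  rewrite mulr0; apply: sumr_ge0 => i _; exact: lexx.
have [q' Hq'M /andP [Ha Hc]] := M_block Hrt Hp (negbT E).
rewrite (bigD1 q') /=; last first.
  rewrite /Bk Hq'M Ha Hc Hrt /= andbT.
  by apply/eqP => Eq; move: E; rewrite -Eq Hq'M.
rewrite -[X in X <= _]addr0 lerD2l; apply: sumr_ge0 => i _.
by apply: mulr_ge0 => //; exact: cw_ge0.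
Qed.

Definition X (q' q : Pk) :=
  \sum_(1 <= tau < H | Bk tau q' q) cw ch q * (rem tau.-1 q)%:R.
Definition Y1 (q q' : Pk) : R :=
  if ch q is Some e then
    (if adjo (ch q') (Some e) && (wt q / (dEdge e)%:R <= cw ch q')
     then wt q * (pendAt ch q q')%:R else 0) else 0.
Definition Y2 (q' q : Pk) : R :=
  if ch q' is Some e then
    (if adjo (ch q) (Some e) && ~~ (wt q' / (dEdge e)%:R <= cw ch q)
     then (dEdge e)%:R * ((pendAt ch q' q)%:R * cw ch q) else 0) else 0.

Lemma Y1_ge0 q q' : 0 <= Y1 q q'.
Proof.
rewrite /Y1; case: (ch q) => // e; case: ifP => // _.
by apply: mulr_ge0 => //; exact: ltW.
Qed.

Lemma Y2_ge0 q' q : 0 <= Y2 q' q.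
Proof.
rewrite /Y2; case: (ch q') => // e; case: ifP => // _.
by apply: mulr_ge0 => //; apply: mulr_ge0 => //; exact: cw_ge0.
Qed.

Lemma adj_sym (e e' : Tx N * Rx N) : adj e e' = adj e' e.
Proof. by rewrite /adj eq_sym [e.2 == _]eq_sym. Qed.

Lemma Xle q' q : X q' q <= Y1 q q' + Y2 q' q.
Proof.
have H0 := addr_ge0 (Y1_ge0 q q') (Y2_ge0 q' q).
case Hb: (adjo (ch q') (ch q) && cle q' q && (q' != q)); last first.
  rewrite /X big1 // => tau; rewrite /Bk.
  by case/and5P => _ Ha Hc Hn _; move: Hb; rewrite Ha Hc Hn.
move/andP: Hb => [/andP [Ha Hc] Hn].
case Hq': (ch q') Ha => [e'|] //; case Hq: (ch q) => [e|] // Ha.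
rewrite /= in Ha.
have cwq : cw ch q = wt q / (dEdge e)%:R by rewrite /cw Hq.
have cwq' : cw ch q' = wt q' / (dEdge e')%:R by rewrite /cw Hq'.
case: (ltngtP q' q) => Hlt; last by move: Hn; rewrite (val_inj Hlt) eqxx.
- (* q' < q : heavier earlier chunk, in H(q, e) *)
  have Hy1 : Y1 q q' = wt q * (rem (relt q).-1 q')%:R.
    rewrite /Y1 Hq Hq' /= Ha /= -cwq.
    have -> : cw ch q <= cw ch q'.
      move: Hc; rewrite /chunk_le => /orP [/ltW //|/andP [/eqP -> _] //].
    by rewrite /pendAt Hlt.
  rewrite -[X q' q]addr0; apply: lerD; last exact: Y2_ge0.
  rewrite Hy1 /X.
  apply: (@le_trans _ _ (\sum_(1 <= tau < H)
     wt q * (nat_of_bool ((relt q <= tau)%N && (q' \in M tau)))%:R)).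
    rewrite big_mkcond /=; apply: ler_sum_nat => tau _.
    case: ifP => HB; last first.
      by apply: mulr_ge0 => //; exact: ltW.
    move: HB; rewrite /Bk => /and5P [-> _ _ _ ->]; rewrite mulr1.
    rewrite -(cwd Hq) ler_wpM2l //; first exact: cw_ge0.
    by rewrite ler_nat -(nchE Hq) rem_le.
  rewrite -mulr_sumr -natr_sum ler_pM2l // ler_nat; apply: cnt_le; exact: hr.
- (* q < q' : lighter earlier chunk, in L(q', e') *)
  have Hlt' : cw ch q < cw ch q'.
    move: Hc; rewrite /chunk_le => /orP [//|/andP [_ Hle]]; lia.
  have Hy2 : Y2 q' q = (dEdge e')%:R * ((rem (relt q').-1 q)%:R * cw ch q).
    rewrite /Y2 Hq' Hq /= adj_sym Ha /= -cwq' -ltNge Hlt'.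
    by rewrite /pendAt Hlt.
  rewrite -[X q' q]add0r; apply: lerD; first exact: Y1_ge0.
  rewrite Hy2 /X.
  apply: (@le_trans _ _ (\sum_(1 <= tau < H)
     (nat_of_bool (q' \in M tau))%:R * (cw ch q * (rem (relt q').-1 q)%:R))).
    rewrite big_mkcond /=; apply: ler_sum_nat => tau _.
    case: ifP => HB; last first.
      by apply: mulr_ge0 => //; apply: mulr_ge0 => //; exact: cw_ge0.
    move: HB; rewrite /Bk => /and5P [HM _ _ _ _]; rewrite HM mul1r.
    rewrite ler_wpM2l //; first exact: cw_ge0.
    rewrite ler_nat; apply: rem_mono.
    move/M_cand: HM => /andP [Hr' _]; lia.
  rewrite -mulr_suml -natr_sum [_ * cw ch q]mulrC ler_wpM2r //.
    by apply: mulr_ge0 => //; exact: cw_ge0.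
  by rewrite ler_nat -(nchE Hq'); apply: cnt1.
Qed.

Lemma sumY1 q : \sum_(q' < np P) Y1 q q' =
  (if ch q is Some e then wt q * (Hcount ch q e)%:R else 0).
Proof.
rewrite /Y1 /Hcount; case: (ch q) => [e|]; last by rewrite big1.
by rewrite natr_sum mulr_sumr [RHS]big_mkcond /=; apply: eq_bigr => i _; case: ifP.
Qed.

Lemma sumY2 q' : \sum_(q < np P) Y2 q' q =
  (if ch q' is Some e then (dEdge e)%:R * WL ch q' e else 0).
Proof.
rewrite /Y2 /WL; case: (ch q') => [e|]; last by rewrite big1.
by rewrite mulr_sumr [RHS]big_mkcond /=; apply: eq_bigr => i _; case: ifP.
Qed.

Definition Sq (q : Pk) := (\sum_(1 <= tau < H) (q \in M tau) * (rem tau.-1 q).-1)%N.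

Lemma selfb q : cw ch q * (Sq q)%:R <=
  (if ch q is Some e then wt q * ((dEdge e)%:R - 1) / 2 else 0).
Proof.
case Hq: (ch q) => [e|]; last by rewrite cwN // mul0r.
have Hd := chd Hq.
have H2 : (2 * Sq q <= dEdge e * (dEdge e).-1)%N.
  rewrite /Sq -(nchE Hq); have := H_gt q; case: H => [|b] // _.
  by rewrite -(self_inv q b) leq_addr.
have H2R : (Sq q)%:R <= (dEdge e)%:R * ((dEdge e)%:R - 1) / 2 :> R.
  rewrite ler_pdivlMr // mulrC -natrM -(@natrB _ _ 1) // -natrM ler_nat.
  by rewrite subn1.
apply: (le_trans (ler_wpM2l (cw_ge0 q) H2R)).
by rewrite !mulrA (cwd Hq).
Qed.

Definition SB (q : Pk) : R := if ch q is Some e then wt q * ((dEdge e)%:R - 1) / 2 else 0.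

Lemma gsum q : cw ch q * (Gq q)%:R <= SB q + \sum_(q' < np P) (Y1 q q' + Y2 q' q).
Proof.
rewrite /Gq natr_sum mulr_sumr.
apply: (le_trans (ler_sum_nat (fun tau Ht => step2 q (proj1 (andP Ht))))).
rewrite big_split /= -mulr_sumr -natr_sum -/(Sq q).
apply: lerD; first exact: selfb.
rewrite (eq_bigr (fun tau => \sum_(q' < np P) if Bk tau q' q then cw ch q * (rem tau.-1 q)%:R else 0));
  last by move=> tau _; rewrite big_mkcond.
rewrite exchange_big /=; apply: ler_sum => q' _.
rewrite -big_mkcond; exact: Xle.
Qed.

Lemma costI : \sum_(q < np P) costp q <=
  \sum_(q < np P) (if ch q is Some e then imp ch q e else 0).
Proof.
apply: (@le_trans _ _ (\sum_(q < np P) (Aq q + (SB q + \sum_(q' < np P) (Y1 q q' + Y2 q' q))))).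
  by apply: ler_sum => q _; apply: (le_trans (step1 q)); rewrite lerD2l gsum.
under eq_bigr do rewrite big_split /= addrA addrA.
rewrite big_split /= [X in _ + X <= _]exchange_big -big_split /=.
apply: ler_sum => q _; rewrite sumY1 sumY2 /Aq /SB /imp.
case Hq: (ch q) => [e|]; last by rewrite !addr0.
rewrite le_eqVlt; apply/orP; left; apply/eqP; rewrite !natrD; by field.
Qed.

Lemma window a b r f (x : R) : 0 <= x ->
  \sum_(a <= tau < b) (if (r <= tau)%N && (tau < f)%N then x else 0)
  <= ((minn b f) - r)%:R * x.
Proof.
move=> Hx; elim: b => [|b IH]; first by rewrite big_geq // mulr_ge0.
case: (leqP a b) => Hab; last by rewrite big_geq // mulr_ge0.
rewrite big_nat_recr //=.
case: ifP => Hc.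
  move/andP: Hc => [H1 H2].
  have -> : minn b.+1 f = b.+1 by apply/minn_idPl.
  have E : minn b f = b by apply/minn_idPl; lia.
  rewrite E in IH; apply: (le_trans (lerD IH (lexx x))).
  rewrite -[X in _ + X]mul1r -mulrDl natr1; apply: ler_wpM2r => //.
  by rewrite ler_nat; lia.
rewrite addr0; apply: (le_trans IH); apply: ler_wpM2r => //.
rewrite ler_nat; apply: leq_sub2r; rewrite !minnE; lia.
Qed.

Lemma costp_ge0 q : 0 <= costp q.
Proof.
apply: sumr_ge0 => s _; apply: mulr_ge0 => //; exact: cw_ge0.
Qed.

Lemma active_le p : \sum_(1 <= tau < H) activeW ch p tau <= costp p.
Proof.
rewrite /activeW /costp exchange_big /=; apply: ler_sum => s Hs.
apply: (le_trans (window 1 H (relt p) (ftime ch p s) (cw_ge0 p))).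
rewrite mulrC ler_wpM2l //; first exact: cw_ge0.
rewrite ler_nat; apply: leq_sub2r; exact: geq_minr.
Qed.

Lemma beta_t_le : \sum_(t : Tx N) \sum_(1 <= tau < H) beta_t ch t tau
  <= \sum_(p < np P) costp p.
Proof.
rewrite /beta_t.
under eq_bigr do rewrite exchange_big /=.
under eq_bigr do rewrite big_mkcond /=.
rewrite exchange_big /=; apply: ler_sum => p _.
case Hp: (ch p) => [e|]; last by rewrite big1 // costp_ge0.
rewrite -big_mkcond (big_pred1 e.1); first exact: active_le.
by move=> t; rewrite /= eq_sym.
Qed.

Lemma beta_r_le : \sum_(r : Rx N) \sum_(1 <= tau < H) beta_r ch r tau
  <= \sum_(p < np P) costp p.
Proof.
rewrite /beta_r.
under eq_bigr do rewrite exchange_big /=.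
under eq_bigr do rewrite big_mkcond /=.
rewrite exchange_big /=; apply: ler_sum => p _.
case Hp: (ch p) => [e|]; last by rewrite big1 // costp_ge0.
rewrite -big_mkcond (big_pred1 e.2); first exact: active_le.
by move=> t; rewrite /= eq_sym.
Qed.

Lemma main_ineq (eps : R) : 0 < eps -> ALG ch <= (2 + eps) / eps * Dual ch eps.
Proof.
move=> heps.
set F := \sum_(p < np P | ch p == None) wt p * (ell p)%:R.
set C := \sum_(p < np P) costp p.
set I := \sum_(q < np P) (if ch q is Some e then imp ch q e else 0).
have HA : ALG ch = F + C by [].
have HF : 0 <= F by apply: sumr_ge0 => p _; apply: mulr_ge0; [exact: ltW|exact: ler0n].
have Hal : \sum_(p < np P) alpha ch p = F + I.
  rewrite /F /I [X in _ = X + _]big_mkcond -big_split /=; apply: eq_bigr => p _.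
  by rewrite /alpha; case: (ch p) => [e|] /=; rewrite ?add0r ?addr0.
have HCI : C <= I := costI.
rewrite /Dual Hal HA -/C.
set Bt := \sum_(t : Tx N) _.
set Br := \sum_(r : Rx N) _.
have Hbt : Bt <= C := beta_t_le.
have Hbr : Br <= C := beta_r_le.
have -> : (2 + eps) / eps * (F + I - (2 + eps)^-1 * (Bt + Br))
   = ((2 + eps) * (F + I) - (Bt + Br)) / eps.
  by field; apply/andP; split; apply: lt0r_neq0 => //; lra.
rewrite ler_pdivlMr //.
have : 0 <= (2 + eps) * (I - C) by apply: mulr_ge0; lra.
move=> H0; nra.
Qed.

End Pf.

Theorem mainTheorem4 (R : realFieldType) (N : network) (P : packets N R)
  (ch : 'I_(np P) -> option (Tx N * Rx N)%type) (eps : R)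
  (hdE : forall e, e \in ER N -> (1 <= dEdge e)%N)
  (hw : forall p : 'I_(np P), 0 < wt p)
  (hr : forall p : 'I_(np P), (1 <= relt p)%N)
  (hE : forall p : 'I_(np P), exists e, e \in @Eset R N P p)
  (hord : forall p q : 'I_(np P), (relt p < relt q)%N -> (p < q)%N)
  (hrun : alg_run ch)
  (heps : 0 < eps) :
  ALG ch <= (2 + eps) / eps * Dual ch eps.
Proof.
exact: (main_ineq hdE hw hr hrun heps).
Qed.
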